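(* Let $\Gamma$ be a simplicial complex on $V_1=\{x_1,\ldots,x_n\}$ with $m$ facets. Let $G_1,\ldots,G_m\subseteq V_1$ be such that each $V_1\setminus G_j$ is a face of $\Gamma$ and every facet of $\Gamma$ is of the form $V_1\setminus G_j$ for some $j$. Let $y_1,\ldots,y_m$ be new vertices, let $\Delta_{V_1}$ be the $(n-1)$-simplex on $x_1,\ldots,x_n$, and define \[\Delta'=\left\{\sigma\cup\tau:\ \sigma\in\Gamma,\ \tau\subseteq\{y_j:\sigma\subseteq V_1\setminus G_j\}\right\},\qquad \Delta=\Delta'\cup\Delta_{V_1}.\] Then for all $i\geq0$, $\widetilde H_{i+1}(\Delta;\mathbb Z)\cong\widetilde H_i(\Gamma;\mathbb Z)$.
   Context: $\widetilde H_i(-;\mathbb Z)$ denotes reduced simplicial homology with integer coefficients. *)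

(* Defs.v *)
From mathcomp Require Import all_boot all_order all_algebra.
Set Implicit Arguments. Unset Strict Implicit. Unset Printing Implicit Defensive.
Import GRing.Theory Num.Theory.
Local Open Scope ring_scope.

Definition is_complex (N : nat) (K : {set {set 'I_N}}) : Prop :=
  set0 \in K /\ (forall s t : {set 'I_N}, t \subset s -> s \in K -> t \in K).

Definition facets (N : nat) (K : {set {set 'I_N}}) : {set {set 'I_N}} :=
  [set s in K | [forall t in K, (s \subset t) ==> (t == s)]].

(* An (oriented) i-simplex is a face of cardinality i+1, oriented by the
   natural order of 'I_N. Degree -1 (the empty face) is included implicitly
   by the boundary of 0-chains landing on set0: this is the augmented
   (reduced) chain complex. *)
Definition chainf (N : nat) := {set 'I_N} -> int.

Definition is_chain (N : nat) (K : {set {set 'I_N}}) (i : nat) (c : chainf N) : Prop :=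
  forall s, c s != 0 -> s \in K /\ #|s| = i.+1.

Definition bd (N : nat) (c : chainf N) : chainf N :=
  fun t => \sum_(v : 'I_N | v \notin t)
             (-1) ^+ #|[set u in t | (u < v)%N]| * c (v |: t).

Definition is_cycle (N : nat) (K : {set {set 'I_N}}) (i : nat) (c : chainf N) : Prop :=
  is_chain K i c /\ bd c =1 (fun _ => 0).

Definition is_boundary (N : nat) (K : {set {set 'I_N}}) (i : nat) (c : chainf N) : Prop :=
  exists b : chainf N, is_chain K i.+1 b /\ c =1 bd b.

Definition addc (N : nat) (c d : chainf N) : chainf N := fun s => c s + d s.
Definition subc (N : nat) (c d : chainf N) : chainf N := fun s => c s - d s.

(* A group homomorphism between quotient groups Z/B -> Z'/B'
   is represented (as usual) by a map f on representatives that sends cycles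
   to cycles, is additive modulo boundaries and sends boundaries to
   boundaries; it is an isomorphism iff it is injective and surjective on
   classes. *)
Definition rhomology_iso (N1 N2 : nat) (K1 : {set {set 'I_N1}}) (i1 : nat)
    (K2 : {set {set 'I_N2}}) (i2 : nat) : Prop :=
  exists f : chainf N1 -> chainf N2,
    [/\ (forall z, is_cycle K1 i1 z -> is_cycle K2 i2 (f z)),
        (forall z w, is_cycle K1 i1 z -> is_cycle K1 i1 w ->
           is_boundary K2 i2 (subc (subc (f (addc z w)) (f z)) (f w))),
        (forall z, is_boundary K1 i1 z -> is_boundary K2 i2 (f z)),
        (forall z, is_cycle K1 i1 z -> is_boundary K2 i2 (f z) ->
           is_boundary K1 i1 z)
      & (forall w, is_cycle K2 i2 w ->
           exists2 z, is_cycle K1 i1 z & is_boundary K2 i2 (subc w (f z)))].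

(* Vertices of Delta: x_k = k (k < n), y_j = n + j (j < m), in 'I_(n+m). *)
Definition xv (n m : nat) (s : {set 'I_n}) : {set 'I_(n + m)} := [set lshift m k | k in s].
Definition yv (n m : nat) (t : {set 'I_m}) : {set 'I_(n + m)} := [set rshift n j | j in t].

Definition Delta' (n m : nat) (Gamma : {set {set 'I_n}}) (G : 'I_m -> {set 'I_n})
  : {set {set 'I_(n + m)}} :=
  [set xv m s :|: yv n t | s in Gamma,
     t in [set t : {set 'I_m} | t \subset [set j | s \subset ~: G j]]].

Definition simplexV1 (n m : nat) : {set {set 'I_(n + m)}} :=
  [set xv m s | s : {set 'I_n}].

Definition Delta (n m : nat) (Gamma : {set {set 'I_n}}) (G : 'I_m -> {set 'I_n})
  : {set {set 'I_(n + m)}} := Delta' Gamma G :|: simplexV1 n m.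

(* Main.v *)
Require Import Defs.
From mathcomp Require Import all_boot all_order all_algebra.
From mathcomp Require Import zify ring lra.
From Stdlib Require Import FunctionalExtensionality.
Set Implicit Arguments. Unset Strict Implicit. Unset Printing Implicit Defensive.
Import GRing.Theory Num.Theory.
Local Open Scope ring_scope.

Definition sg (N : nat) (t : {set 'I_N}) (v : 'I_N) : int :=
  (-1) ^+ #|[set u in t | (u < v)%N]|.

Lemma bdE N (c : chainf N) t : bd c t = \sum_(v | v \notin t) sg t v * c (v |: t).
Proof. by []. Qed.

Lemma sgU N (t : {set 'I_N}) (u v : 'I_N) : u \notin t -> u != v ->
  sg (u |: t) v = (if (u < v)%N then -1 else 1) * sg t v.
Proof.
move=> ut uv; rewrite /sg.
case: ifP => uv'.
  have -> : [set x in u |: t | (x < v)%N] = u |: [set x in t | (x < v)%N].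
    by apply/setP=> x; rewrite !inE; case: eqP => [->|]; rewrite ?uv' ?orbF.
  by rewrite cardsU1 inE (negbTE ut) /= exprS.
have -> : [set x in u |: t | (x < v)%N] = [set x in t | (x < v)%N].
  by apply/setP=> x; rewrite !inE; case: eqP => [->|]; rewrite ?uv' ?andbF.
by rewrite mul1r.
Qed.

Lemma sg_sq N (t : {set 'I_N}) v : sg t v * sg t v = 1.
Proof. by rewrite /sg -exprD -signr_odd oddD addbb. Qed.

Lemma sg_swap N (t : {set 'I_N}) (v w : 'I_N) : v \notin t -> w \notin t -> v != w ->
  sg t v * sg (v |: t) w = - (sg t w * sg (w |: t) v).
Proof.
move=> vt wt vw; rewrite (sgU vt vw) (sgU wt) 1?eq_sym //.
have hvw : (v : nat) != w by [].
have [h|h] : ((v < w)%N /\ (w < v)%N = false) \/ ((w < v)%N /\ (v < w)%N = false).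
  by move/eqP: hvw; lia.
- by case: h => -> ->; ring.
- by case: h => -> ->; ring.
Qed.

Lemma bdD N (c d : chainf N) t : bd (fun s => c s + d s) t = bd c t + bd d t.
Proof. by rewrite /bd -big_split; apply: eq_bigr => v _; rewrite mulrDr. Qed.

Lemma bdN N (c : chainf N) t : bd (fun s => - c s) t = - bd c t.
Proof. by rewrite /bd -sumrN; apply: eq_bigr => v _; rewrite mulrN. Qed.

Lemma bdB N (c d : chainf N) t : bd (fun s => c s - d s) t = bd c t - bd d t.
Proof. by rewrite (bdD c (fun s => - d s)) bdN. Qed.

Lemma bd0 N t : bd (fun _ : {set 'I_N} => 0) t = 0.
Proof. by rewrite /bd big1 // => v _; rewrite mulr0. Qed.

Lemma bd_ext N (c d : chainf N) : c =1 d -> bd c = bd d.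
Proof. by move=> e; apply: functional_extensionality => t; apply: eq_bigr => v _; rewrite e. Qed.

Lemma bd_supp N (c : chainf N) t : bd c t != 0 -> exists v, v \notin t /\ c (v |: t) != 0.
Proof.
move=> h; case: (pickP (fun v => (v \notin t) && (c (v |: t) != 0))) => [v /andP[]|none].
  by exists v.
move: h; rewrite /bd big1 ?eqxx // => v vt.
by move: (none v); rewrite vt /= => /negbFE/eqP ->; rewrite mulr0.
Qed.

Lemma int_eqN (S : int) : S = - S -> S = 0.
Proof. lia. Qed.

Lemma bdbd N (c : chainf N) t : bd (bd c) t = 0.
Proof.
pose F v w := if (v \notin t) && (w \notin t) && (v != w)
  then sg t v * sg (v |: t) w * c (w |: (v |: t)) else 0.
have E : bd (bd c) t = \sum_v \sum_w F v w.
  rewrite /bd big_mkcond; apply: eq_bigr => v _.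
  case vt: (v \notin t) => /=; last by rewrite big1 // => w _; rewrite /F vt.
  rewrite big_distrr big_mkcond; apply: eq_bigr => w _.
  rewrite /F vt in_setU1 negb_or eq_sym /=.
  by case: (w \notin t); case: (v != w) => //=; rewrite mulrA.
have FN v w : F v w = - F w v.
  rewrite /F eq_sym; case vt: (v \notin t); case wt: (w \notin t);
    rewrite /= ?oppr0 //; case: eqP => [->|/eqP vw]; rewrite ?oppr0 //=.
  rewrite eq_sym in vw.
  by rewrite setUCA (sg_swap vt wt vw) mulNr.
rewrite E; apply: int_eqN.
rewrite [LHS]exchange_big -sumrN; apply: eq_bigr => w _; rewrite -sumrN.
by apply: eq_bigr => v _; rewrite FN.
Qed.

Definition cone N (a : 'I_N) (c : chainf N) : chainf N :=
  fun s => if a \in s then sg (s :\ a) a * c (s :\ a) else 0.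

Lemma bd_cone N a (c : chainf N) t : bd (cone a c) t + cone a (bd c) t = c t.
Proof.
rewrite /cone; case: ifP => at_; last first.
  rewrite addr0 /bd (bigD1 a) ?at_ //= big1 ?addr0.
    by rewrite setU1K ?at_ // in_setU1 eqxx /= mulrA sg_sq mul1r.
  move=> v /andP[vt va]; rewrite in_setU1 eq_sym (negbTE va) at_ /= mulr0 //.
set t' := t :\ a.
have at' : a \notin t' by rewrite !inE eqxx.
have tt : t = a |: t' by rewrite setD1K.
rewrite /bd [X in _ + _ * X](bigD1 a) //= -tt mulrDr mulrA sg_sq mul1r addrC -addrA.
rewrite -[RHS]addr0; congr (_ + _).
have memt v : (v \notin t') && (v != a) = (v \notin t).
  rewrite /t' !inE; case: eqP => [->|_] /=; by rewrite ?at_ ?andbT.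
rewrite big_distrr /= (eq_bigl _ _ memt) -big_split /= big1 // => v vt.
have va : v != a by apply: contraNneq vt => ->.
rewrite in_setU1 at_ orbT /=.
have -> : (v |: t) :\ a = v |: t'.
  by rewrite tt setUCA setU1K // in_setU1 negb_or eq_sym va at'.
have vt' : v \notin t' by rewrite -memt in vt; case/andP: vt.
have va' : a != v by rewrite eq_sym.
rewrite -/(sg t' v) -/(sg t v) [in sg t v]tt (sgU at' va') (sgU vt' va).
have hvw : (v : nat) != a by [].
have [h|h] : ((a < v)%N /\ (v < a)%N = false) \/ ((v < a)%N /\ (a < v)%N = false).
  by move/eqP: hvw; lia.
- by case: h => -> ->; ring.
- by case: h => -> ->; ring.
Qed.

Lemma supp_add (x y : int) : x + y != 0 -> x != 0 \/ y != 0.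
Proof. by case: (x =P 0) => [->|/eqP]; [rewrite add0r; right|left]. Qed.

Lemma chainD N (D : {set {set 'I_N}}) (k : nat) (c d : chainf N) :
  is_chain D k c -> is_chain D k d -> is_chain D k (fun s => c s + d s).
Proof. by move=> hc hd s /supp_add [/hc|/hd]. Qed.

Lemma chainN N (D : {set {set 'I_N}}) (k : nat) (c : chainf N) :
  is_chain D k c -> is_chain D k (fun s => - c s).
Proof. by move=> hc s; rewrite oppr_eq0 => /hc. Qed.

Lemma chainB N (D : {set {set 'I_N}}) (k : nat) (c d : chainf N) :
  is_chain D k c -> is_chain D k d -> is_chain D k (fun s => c s - d s).
Proof. by move=> hc hd; apply: chainD => //; apply: chainN. Qed.

Lemma chain0 N (D : {set {set 'I_N}}) k : is_chain D k (fun _ => 0).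
Proof. by move=> s; rewrite eqxx. Qed.

Lemma chain_sub N (D E : {set {set 'I_N}}) (k : nat) (c : chainf N) :
  {subset D <= E} -> is_chain D k c -> is_chain E k c.
Proof. by move=> sDE hc s /hc [/sDE]. Qed.

Lemma bd_chain N (D : {set {set 'I_N}}) (k : nat) (c : chainf N) :
  (forall s t : {set 'I_N}, t \subset s -> s \in D -> t \in D) ->
  is_chain D k.+1 c -> is_chain D k (bd c).
Proof.
move=> dc hc t /bd_supp [v [vt /hc [vD cv]]]; split.
  by apply: dc vD; apply: subsetUr.
by move: cv; rewrite cardsU1 vt add1n => -[].
Qed.

Lemma bound0 N (D : {set {set 'I_N}}) k : is_boundary D k (fun _ => 0).
Proof. by exists (fun _ => 0); split; [apply: chain0 | move=> t; rewrite bd0]. Qed.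

Definition xs N (X : pred 'I_N) (t : {set 'I_N}) := [set u in t | X u].

Lemma xsU1 N (X : pred 'I_N) v s :
  xs X (v |: s) = if X v then v |: xs X s else xs X s.
Proof.
  apply/setP => u; rewrite /xs; case: ifP => Xv; rewrite !inE;
  case: (u =P v) => [->|_] /=; rewrite ?Xv ?andbF //.
Qed.

Lemma xsD1 N (X : pred 'I_N) a s : ~~ X a -> xs X (s :\ a) = xs X s.
Proof.
move=> Xa; apply/setP => u; rewrite /xs !inE; case: eqP => [->|] //=.
by rewrite (negbTE Xa) andbF.
Qed.

Lemma acyclic_local N (X : pred 'I_N) (D : {set {set 'I_N}}) (apex : {set 'I_N} -> 'I_N) :
  (forall s t : {set 'I_N}, t \subset s -> s \in D -> t \in D) ->
  (forall u, ~~ X (apex u)) ->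
  (forall t, t \in D -> apex (xs X t) |: t \in D) ->
  forall k c, is_cycle D k c -> is_boundary D k c.
Proof.
move=> dc hX hD k.
pose H (c : chainf N) : chainf N := fun s => cone (apex (xs X s)) c s.
have top p c s : (forall s, c s != 0 -> (#|xs X s| <= p)%N) -> bd c =1 (fun _ => 0) ->
    (p <= #|xs X s|)%N -> bd (H c) s = c s.
  move=> cp cc ps.
  have z0 b v : ~~ X b -> v \notin s -> X v -> cone b c (v |: s) = 0.
    move=> Xb vs Xv; rewrite /cone; case: ifP => // _.
    apply/eqP; rewrite mulf_eq0; apply/orP; right; apply/negP => /negP /cp.
    rewrite xsD1 // xsU1 Xv cardsU1 (_ : v \notin xs X s = true) /=; first by move=> /leq_trans/(_ ps); rewrite add1n ltnn.
    by rewrite /xs inE (negbTE vs).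
  have -> : bd (H c) s = bd (cone (apex (xs X s)) c) s.
    apply: eq_bigr => v vs; rewrite /H; case Xv: (X v).
      by rewrite !z0.
    by rewrite xsU1 Xv.
  have := bd_cone (apex (xs X s)) c s; rewrite {2}/cone.
  by case: ifP => _; rewrite ?cc ?mulr0 addr0.
have main p : forall c, is_cycle D k c -> (forall s, c s != 0 -> (#|xs X s| < p)%N) ->
    is_boundary D k c.
  elim: p => [|p IH] c [cch ccy] cp.
    have c0 : c = fun _ => 0.
      by apply: functional_extensionality => s; apply/eqP; apply: contraT => /cp.
    by rewrite c0; apply: bound0.
  have hch : is_chain D k.+1 (H c).
    move=> s; rewrite /H /cone; set a := apex _; case: ifP => [as_|]; last by rewrite eqxx.
    rewrite mulf_eq0 negb_or => /andP[_ /cch [sD cs]].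
    have Xa : ~~ X a by apply: hX.
    split; last by rewrite (cardsD1 a s) as_ cs.
    by move: (hD _ sD); rewrite xsD1 // -/a setD1K.
  pose c' := fun s => c s - bd (H c) s.
  have c'cy : is_cycle D k c'.
    split; first by apply: chainB => //; apply: bd_chain.
    by move=> t; rewrite /c' bdB ccy bdbd subrr.
  have [b [bch bE]] : is_boundary D k c'.
    apply: IH => // s; rewrite /c'; apply: contraR; rewrite -leqNgt => ps.
    by rewrite (top p) ?subrr // => u /cp; rewrite ltnS.
  exists (fun s => b s + H c s); split; first by apply: chainD.
  by move=> t; rewrite bdD -bE /c' subrK.
move=> c cc; apply: (main N.+1) => // s _.
by rewrite ltnS; apply: leq_trans (max_card _) _; rewrite card_ord.
Qed.


Definition prex n m (s : {set 'I_(n + m)}) : {set 'I_n} := [set k | lshift m k \in s].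
Definition prey n m (s : {set 'I_(n + m)}) : {set 'I_m} := [set j | rshift n j \in s].
Definition isX n m (s : {set 'I_(n + m)}) := prey s == set0.

Lemma lr_neq n m (k : 'I_n) (j : 'I_m) : (lshift m k == rshift n j) = false.
Proof. apply/negbTE/eqP => /(congr1 val) /=; have := ltn_ord k; lia. Qed.

Lemma lxv n m (k : 'I_n) s : (lshift m k \in xv m s) = (k \in s).
Proof. by rewrite mem_imset //; apply: lshift_inj. Qed.
Lemma lyv n m (k : 'I_n) (t : {set 'I_m}) : (lshift m k \in yv n t) = false.
Proof. by apply/imsetP => -[j _ /eqP]; rewrite lr_neq. Qed.
Lemma rxv n m (j : 'I_m) (s : {set 'I_n}) : (rshift n j \in xv m s) = false.
Proof. by apply/imsetP => -[k _ /eqP]; rewrite eq_sym lr_neq. Qed.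
Lemma ryv n m (j : 'I_m) (t : {set 'I_m}) : (rshift n j \in yv n t) = (j \in t).
Proof. by rewrite mem_imset //; apply: rshift_inj. Qed.

Lemma decomp n m (s : {set 'I_(n + m)}) : s = xv m (prex s) :|: yv n (prey s).
Proof.
apply/setP => i; rewrite -(splitK i); case: (split i) => [k|j] /=;
  by rewrite in_setU ?lxv ?lyv ?rxv ?ryv !inE ?orbF.
Qed.

Lemma prex_xy n m (s : {set 'I_n}) (t : {set 'I_m}) : prex (xv m s :|: yv n t) = s.
Proof. by apply/setP => k; rewrite !inE lxv lyv orbF. Qed.
Lemma prey_xy n m (s : {set 'I_n}) (t : {set 'I_m}) : prey (xv m s :|: yv n t) = t.
Proof. by apply/setP => k; rewrite !inE rxv ryv. Qed.
Lemma prex_xv n m (s : {set 'I_n}) : prex (xv m s) = s.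
Proof. by apply/setP => k; rewrite !inE lxv. Qed.
Lemma prey_xv n m (s : {set 'I_n}) : prey (xv m s) = set0.
Proof. by apply/setP => k; rewrite !inE rxv. Qed.

Lemma isXE n m (s : {set 'I_(n + m)}) : isX s -> s = xv m (prex s).
Proof. by move/eqP => h; rewrite {1}(decomp s) h /yv imset0 setU0. Qed.

Lemma inDelta' n m (Gamma : {set {set 'I_n}}) (G : 'I_m -> {set 'I_n}) s :
  (s \in Delta' Gamma G) =
  (prex s \in Gamma) && (prey s \subset [set j | prex s \subset ~: G j]).
Proof.
apply/imset2P/andP => [[x y xG]|[h1 h2]].
  by rewrite inE => yG ->; rewrite prex_xy prey_xy.
by exists (prex s) (prey s); rewrite ?inE // -decomp.
Qed.

Lemma inS n m (s : {set 'I_(n + m)}) : (s \in simplexV1 n m) = isX s.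
Proof.
apply/imsetP/idP => [[x _ ->]|h]; first by rewrite /isX prey_xv.
by exists (prex s) => //; apply: isXE.
Qed.

Definition pull n m (c : chainf (n + m)) : chainf n := fun s => c (xv m s).
Definition push n m (w : chainf n) : chainf (n + m) :=
  fun s => if isX s then w (prex s) else 0.
Definition restX n m (c : chainf (n + m)) : chainf (n + m) :=
  fun s => if isX s then c s else 0.
Definition restY n m (c : chainf (n + m)) : chainf (n + m) :=
  fun s => if isX s then 0 else c s.
Definition Xsupp n m (c : chainf (n + m)) := forall s, c s != 0 -> isX s.
Arguments pull {n m} c s.
Arguments push {n} m w s.
Arguments restX {n m} c s.
Arguments restY {n m} c s.
Arguments Xsupp {n m} c.

Lemma isX_sub n m (s t : {set 'I_(n + m)}) : t \subset s -> isX s -> isX t.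
Proof.
move=> ts /eqP h; apply/eqP/setP => j; rewrite !inE; apply/negbTE/negP => jt.
have : j \in prey s by rewrite inE (subsetP ts).
by rewrite h inE.
Qed.

Lemma isX_xv n m (s : {set 'I_n}) : isX (xv m s).
Proof. by rewrite /isX prey_xv. Qed.

Lemma bd_Xsupp n m (c : chainf (n + m)) : Xsupp c -> Xsupp (bd c).
Proof. by move=> h t /bd_supp [v [_ /h]]; apply: isX_sub; apply: subsetUr. Qed.

Lemma restX_Xsupp n m (c : chainf (n + m)) : Xsupp (restX c).
Proof. by move=> s; rewrite /restX; case: ifP => //; rewrite eqxx. Qed.

Lemma sg_xv n m (s : {set 'I_n}) k : sg (xv m s) (lshift m k) = sg s k.
Proof.
rewrite /sg; congr (_ ^+ _).
have -> : [set u in xv m s | (u < lshift m k)%N] = xv m [set u in s | (u < k)%N].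
  apply/setP => i; rewrite -(splitK i); case: (split i) => [k'|j] /=.
    by rewrite !inE !lxv !inE.
  by rewrite !inE !rxv.
by rewrite card_imset //; apply: lshift_inj.
Qed.

Lemma xvU1 n m (k : 'I_n) s : xv m (k |: s) = lshift m k |: xv m s.
Proof. by rewrite /xv imsetU1. Qed.

Lemma card_xv n m (s : {set 'I_n}) : #|xv m s| = #|s|.
Proof. by rewrite card_imset //; apply: lshift_inj. Qed.

Lemma bd_pull n m (c : chainf (n + m)) : Xsupp c -> pull (bd c) = bd (pull c).
Proof.
move=> hc; apply: functional_extensionality => s; rewrite /pull /bd big_split_ord /=.
rewrite [X in _ + X]big1 ?addr0; last first.
  move=> j _; apply/eqP; apply: contraT.
  rewrite mulf_eq0 negb_or => /andP[_ /hc /eqP h].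
  have : j \in prey (rshift n j |: xv m s) by rewrite !inE eqxx.
  by rewrite h inE.
apply: eq_big => [k|k _]; first by rewrite lxv.
by rewrite -/(sg (xv m s) (lshift m k)) sg_xv xvU1.
Qed.

Lemma pull_push n m (w : chainf n) : pull (push m w) = w.
Proof. by apply: functional_extensionality => s; rewrite /pull /push isX_xv prex_xv. Qed.

Lemma push_pull n m (c : chainf (n + m)) : Xsupp c -> push m (pull c) = c.
Proof.
move=> hc; apply: functional_extensionality => s; rewrite /pull /push.
case: ifP => [/isXE <- //|h]; apply/esym/eqP; apply: contraT => /(hc s); by rewrite h.
Qed.

Lemma push_Xsupp n m (w : chainf n) : Xsupp (push m w).
Proof. by move=> s; rewrite /push; case: ifP => //; rewrite eqxx. Qed.

Lemma bd_push n m (w : chainf n) : bd (push m w) = push m (bd w).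
Proof.
rewrite -[LHS](push_pull (bd_Xsupp (@push_Xsupp n m w))).
rewrite bd_pull; last exact: push_Xsupp.
by rewrite (@pull_push n m w).
Qed.

Lemma splitXY n m (c : chainf (n + m)) s : c s = restX c s + restY c s.
Proof. by rewrite /restX /restY; case: ifP; rewrite ?addr0 ?add0r. Qed.

Lemma bd_splitXY n m (c : chainf (n + m)) t : bd c t = bd (restX c) t + bd (restY c) t.
Proof. by rewrite -bdD; apply: eq_bigr => v _; rewrite -splitXY. Qed.

Lemma restY_X n m (c : chainf (n + m)) : Xsupp c -> restY c = fun _ => 0.
Proof.
move=> h; apply: functional_extensionality => s; rewrite /restY; case: ifP => // hs.
by apply/eqP; apply: contraT => /(h s); rewrite hs.
Qed.


Lemma dc_Delta' n m (Gamma : {set {set 'I_n}}) (G : 'I_m -> {set 'I_n}) :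
  is_complex Gamma ->
  forall s t : {set 'I_(n + m)}, t \subset s -> s \in Delta' Gamma G -> t \in Delta' Gamma G.
Proof.
move=> [_ hc] s t ts; rewrite !inDelta' => /andP[xs ys].
have xts : prex t \subset prex s.
  by apply/subsetP => k; rewrite !inE => /(subsetP ts).
apply/andP; split; first by apply: hc xs.
apply/subsetP => j jt; have : j \in prey s by move: jt; rewrite !inE => /(subsetP ts).
by move/(subsetP ys); rewrite !inE => /(subset_trans xts).
Qed.

Lemma inDelta n m (Gamma : {set {set 'I_n}}) (G : 'I_m -> {set 'I_n}) s :
  (s \in Delta Gamma G) = (s \in Delta' Gamma G) || isX s.
Proof. by rewrite /Delta in_setU inS. Qed.

Lemma dc_Delta n m (Gamma : {set {set 'I_n}}) (G : 'I_m -> {set 'I_n}) :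
  is_complex Gamma ->
  forall s t : {set 'I_(n + m)}, t \subset s -> s \in Delta Gamma G -> t \in Delta Gamma G.
Proof.
move=> hc s t ts; rewrite !inDelta => /orP[h|h]; apply/orP.
  by left; apply: dc_Delta' ts h.
by right; apply: isX_sub ts h.
Qed.

Lemma restY_chain n m (Gamma : {set {set 'I_n}}) (G : 'I_m -> {set 'I_n}) k (c : chainf (n + m)) :
  is_chain (Delta Gamma G) k c -> is_chain (Delta' Gamma G) k (restY c).
Proof.
move=> hc s; rewrite /restY; case: ifP => [_|hX]; first by rewrite eqxx.
by move=> /hc [+ ->]; rewrite inDelta hX orbF.
Qed.

Lemma restX_chain' N (D : {set {set 'I_N}}) k (c : chainf N) (P : {set 'I_N} -> bool) :
  is_chain D k c -> is_chain D k (fun s => if P s then c s else 0).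
Proof. by move=> hc s; case: ifP => _; [apply: hc | rewrite eqxx]. Qed.

Lemma pull_chain n m (Gamma : {set {set 'I_n}}) (G : 'I_m -> {set 'I_n}) k (c : chainf (n + m)) :
  is_chain (Delta' Gamma G) k c -> is_chain Gamma k (pull c).
Proof.
move=> hc s /hc; rewrite inDelta' prex_xv card_xv => -[/andP[? _] ?]; by split.
Qed.

Lemma push_chain n m (Gamma : {set {set 'I_n}}) (G : 'I_m -> {set 'I_n}) k (w : chainf n) :
  is_chain Gamma k w -> is_chain (Delta' Gamma G) k (push m w).
Proof.
move=> hw s; rewrite /push; case: ifP => [hX|]; last by rewrite eqxx.
move=> /hw [h1 h2]; rewrite (isXE hX) inDelta' prex_xv prey_xv sub0set card_xv h1.
by split.
Qed.

Lemma Delta'_sub n m (Gamma : {set {set 'I_n}}) (G : 'I_m -> {set 'I_n}) :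
  {subset Delta' Gamma G <= Delta Gamma G}.
Proof. by move=> s h; rewrite inDelta h. Qed.

Lemma acyclic' n m (Gamma : {set {set 'I_n}}) (G : 'I_m -> {set 'I_n}) (j0 : 'I_m) :
  is_complex Gamma ->
  (forall s, s \in Gamma -> exists j, s \subset ~: G j) ->
  forall k c, is_cycle (Delta' Gamma G) k c -> is_boundary (Delta' Gamma G) k c.
Proof.
move=> hc hY.
pose X := fun i : 'I_(n + m) => (i < n)%N.
pose apex (u : {set 'I_(n + m)}) := rshift n (odflt j0 [pick j | prex u \subset ~: G j]).
apply: (@acyclic_local _ X _ apex); first exact: dc_Delta'.
  by move=> u; rewrite /X /=; lia.
move=> t; rewrite !inDelta' => /andP[xt yt].
have ex : prex (xs X t) = prex t.
  by apply/setP => k; rewrite !inE /X /= ltn_ord andbT.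
rewrite /apex ex; case: pickP => [j hj|none]; last first.
  by have [j hj] := hY _ xt; move: (none j); rewrite hj.
have xU : prex (rshift n j |: t) = prex t.
  by apply/setP => k; rewrite !inE lr_neq.
rewrite xU xt /=; apply/subsetP => i; rewrite !inE (inj_eq (@rshift_inj _ _)).
case: eqP => [->|_] /=; first by rewrite hj.
by move=> /= it; move/subsetP: yt => /(_ i); rewrite !inE; apply.
Qed.

Lemma Xcycle n m (Gamma : {set {set 'I_n}}) (G : 'I_m -> {set 'I_n}) k (e : chainf (n + m)) :
  is_chain (Delta Gamma G) k e -> Xsupp e -> bd e =1 (fun _ => 0) ->
  exists v, [/\ is_chain (Delta Gamma G) k.+1 v, Xsupp v & e =1 bd v].
Proof.
move=> ech eX ecy; case: (posnP n) => [n0|npos].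
  exists (fun _ => 0); split; first exact: chain0.
    by move=> s; rewrite eqxx.
  move=> s; rewrite bd0; apply/eqP; apply: contraT => es.
  have [_] := ech _ es; rewrite (isXE (eX _ es)) card_xv.
  by have := max_card (prex s); rewrite card_ord; lia.
have SD : {subset simplexV1 n m <= Delta Gamma G}.
  by move=> s; rewrite inS inDelta => ->; rewrite orbT.
have h1 : forall s t : {set 'I_(n + m)}, t \subset s -> s \in simplexV1 n m -> t \in simplexV1 n m.
  by move=> s t ts; rewrite !inS; apply: isX_sub.
have h2 : forall u : {set 'I_(n + m)}, ~~ (fun _ => false) ((fun _ => lshift m (Ordinal npos)) u) by [].
have h3 : forall t, t \in simplexV1 n m ->
    (fun _ => lshift m (Ordinal npos)) (xs (fun _ => false) t) |: t \in simplexV1 n m.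
  move=> t; rewrite !inS /isX => /eqP h; apply/eqP; rewrite -h.
  by apply/setP => j; rewrite !inE eq_sym lr_neq.
have ecy' : is_cycle (simplexV1 n m) k e.
  split; last exact: ecy.
  by move=> s /[dup] /eX; rewrite -inS => h /ech [_ ->].
have [b [bch bE]] := @acyclic_local _ (fun _ => false) _ (fun _ => lshift m (Ordinal npos)) h1 h2 h3 _ _ ecy'.
exists b; split => //; first exact: chain_sub bch.
by move=> s /bch [+ _]; rewrite inS.
Qed.

Lemma faceY n m (Gamma : {set {set 'I_n}}) (G : 'I_m -> {set 'I_n}) :
  (forall F, F \in facets Gamma -> exists j : 'I_m, F = ~: G j) ->
  forall s, s \in Gamma -> exists j, s \subset ~: G j.
Proof.
move=> hF s sG.
case: (@arg_maxnP _ s (fun t => (t \in Gamma) && (s \subset t)) (fun t => #|t|)).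
  by rewrite sG subxx.
move=> t /andP[tG st] tmax.
have : t \in facets Gamma.
  rewrite inE tG /=; apply/forallP => u; apply/implyP => uG; apply/implyP => tu.
  by rewrite eq_sym eqEcard tu /=; apply: tmax; rewrite uG (subset_trans st tu).
by move=> /hF [j tE]; exists j; rewrite -tE.
Qed.

Lemma cycle_Y n m (z : chainf (n + m)) : bd z =1 (fun _ => 0) -> Xsupp (bd (restY z)).
Proof.
move=> zc t h; have := zc t; rewrite bd_splitXY => /eqP; rewrite addr_eq0 => /eqP e.
by apply: (bd_Xsupp (@restX_Xsupp n m z)); rewrite e oppr_eq0.
Qed.

Theorem theorem4p7 (n m : nat) (Gamma : {set {set 'I_n}}) (G : 'I_m -> {set 'I_n}) :
  is_complex Gamma ->
  #|facets Gamma| = m ->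
  (forall j : 'I_m, ~: G j \in Gamma) ->
  (forall F, F \in facets Gamma -> exists j : 'I_m, F = ~: G j) ->
  forall i : nat, rhomology_iso (Delta Gamma G) i.+1 Gamma i.
Proof.
move=> hc _ _ hF i.
have hY := faceY hF.
have [j0 _] := hY _ hc.1.
have dc' := @dc_Delta' n m Gamma G hc.
have acy := acyclic' j0 hc hY.
exists (fun z => pull (bd (restY z))); split.
- move=> z [zch zcy]; split.
    by apply: pull_chain; apply: bd_chain dc' _; apply: restY_chain zch.
  by move=> s; rewrite -(bd_pull (cycle_Y zcy)) /pull bdbd.
- move=> z w _ _.
  have -> : subc (subc (pull (bd (restY (addc z w)))) (pull (bd (restY z))))
      (pull (bd (restY w))) = fun _ => 0.
    apply: functional_extensionality => s; rewrite /subc /pull.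
    rewrite (_ : restY (addc z w) = fun s => restY z s + restY w s) ?bdD; first by ring.
    by apply: functional_extensionality => u; rewrite /restY /addc; case: ifP; rewrite ?addr0.
  exact: bound0.
- move=> z [w [wch zE]].
  have -> : z = bd w by apply: functional_extensionality.
  set u := bd (restY w).
  have -> : restY (bd w) = restY u.
    apply: functional_extensionality => s; rewrite /restY /u; case: ifP => // hs.
    rewrite bd_splitXY; have := @bd_Xsupp n m _ (@restX_Xsupp n m w) s.
    by case: (bd (restX w) s =P 0) => [->|_ /(_ isT)]; [rewrite add0r | rewrite hs].
  exists (fun s => - pull (restX u) s); split.
    apply: chainN; apply: pull_chain; apply: (@restX_chain' _ _ _ _ (@isX n m)).
    by apply: bd_chain dc' _; apply: restY_chain wch.
  move=> s; rewrite bdN -(bd_pull (@restX_Xsupp n m u)) /pull.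
  have := bd_splitXY u (xv m s); rewrite /u bdbd -/u => /eqP.
  by rewrite eq_sym addr_eq0 => /eqP ->; rewrite opprK.
- move=> z [zch zcy] [c [cch cE]].
  have hcY := cycle_Y zcy.
  have bcp : bd (push m c) = bd (restY z).
    rewrite bd_push (_ : bd c = pull (bd (restY z))); first exact: push_pull.
    by apply: functional_extensionality => s; rewrite cE.
  pose d := fun s => restY z s - push m c s.
  have dch : is_chain (Delta' Gamma G) i.+1 d.
    by apply: chainB; [apply: restY_chain zch | apply: push_chain cch].
  have [u [uch dE]] : is_boundary (Delta' Gamma G) i.+1 d.
    by apply: acy; split => // t; rewrite /d bdB bcp subrr.
  pose e := fun s => restX z s + push m c s.
  have eE s : e s = z s - d s by rewrite /e /d (splitXY z s); ring.
  have ech : is_chain (Delta Gamma G) i.+1 e.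
    apply: chainD; first exact: (@restX_chain' _ _ _ _ (@isX n m)).
    by apply: chain_sub (@Delta'_sub n m Gamma G) _; apply: push_chain cch.
  have eX : Xsupp e.
    move=> s /supp_add [|]; first exact: restX_Xsupp.
    exact: push_Xsupp.
  have ecy : bd e =1 (fun _ => 0).
    move=> t; rewrite (bd_ext eE) bdB zcy (bd_ext dE) bdbd subrr //.
  have [v [vch _ vE]] := Xcycle ech eX ecy.
  exists (fun s => v s + u s); split.
    by apply: chainD => //; apply: chain_sub (@Delta'_sub n m Gamma G) _.
  move=> t; rewrite bdD -vE -dE eE; ring.
- move=> w [wch wcy].
  have wpch : is_chain (Delta' Gamma G) i (push m w) by apply: push_chain.
  have wpcy : bd (push m w) =1 (fun _ => 0).
    by move=> t; rewrite bd_push /push; case: ifP => //; rewrite wcy.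
  have [a [ach aE]] := acy _ _ (conj wpch wpcy).
  have [b [bch bX bE]] := Xcycle (chain_sub (@Delta'_sub n m Gamma G) wpch)
                            (@push_Xsupp n m w) wpcy.
  exists (fun s => a s - b s).
    split; first by apply: chainB => //; apply: chain_sub (@Delta'_sub n m Gamma G) _.
    by move=> t; rewrite bdB -aE -bE subrr.
  have -> : restY (fun s => a s - b s) = restY a.
    apply: functional_extensionality => s; rewrite /restY; case: ifP => // hs.
    case: (b s =P 0) => [->|/eqP /bX]; first by rewrite subr0.
    by rewrite hs.
  exists (pull (restX a)); split.
    by apply: (@pull_chain n m Gamma G); apply: (@restX_chain' _ _ _ _ (@isX n m)).
  move=> s; rewrite /subc -(bd_pull (@restX_Xsupp n m a)).
  rewrite -{1}(pull_push m w) /pull aE bd_splitXY; ring.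
Qed.
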